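(* Let $\mathbf{k}=\mathbb{R}$ or $\mathbb{C}$, let $(C^\bullet,\partial)$ be a complex of finite-dimensional $\mathbf{k}$-vector spaces of odd length $d=2r-1$, and let $\Gamma_t$, $t\in\mathbb{R}$, be a smooth family of chirality operators on $C^\bullet$. Then \[ \frac{d}{dt}\rho_{\Gamma_t}=\frac12\operatorname{Tr}_s(\dot\Gamma_t\circ\Gamma_t)\cdot\rho_{\Gamma_t}, \] where $\rho_{\Gamma_t}$ is regarded as a smooth curve in the fixed line $\operatorname{Det}(H^\bullet(\partial))$.
   Context: $\dot\Gamma_t$ is the $t$-derivative of $\Gamma_t$; $\dot\Gamma_t\circ\Gamma_t$ maps each $C^k$ to itself, and $\operatorname{Tr}_s(\dot\Gamma_t\circ\Gamma_t):=\sum_{j=0}^d(-1)^j\operatorname{Tr}(\dot\Gamma_t\circ\Gamma_t|_{C^j})$. Determinant lines: $\operatorname{Det}(V)=\Lambda^{\dim V}V$, $\operatorname{Det}(0)=\mathbf{k}$, $L^{-1}=\operatorname{Hom}(L,\mathbf{k})$, $l^{-1}(l)=1$, $\operatorname{Det}(V^\bullet)=\bigotimes_j\operatorname{Det}(V^j)^{(-1)^j}$; $\mu_{V_1,\dots,V_r}$ is the fusion isomorphism concatenating wedges. The isomorphism $\phi_{C^\bullet}:\operatorname{Det}(C^\bullet)\to\operatorname{Det}(H^\bullet(\partial))$: choose $C^j=B^j\oplus H^j\oplus A^j$ with $B^j\oplus H^j=\operatorname{Ker}\partial\cap C^j$, $B^j=\partial(A^{j-1})=\partial(C^{j-1})$,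 $A^{-1}=A^d=0$; for nonzero $c_j\in\operatorname{Det}(C^j)$, $a_j\in\operatorname{Det}(A^j)$ ($a_{-1}=1$), $h_j\in\operatorname{Det}(H^j)\cong\operatorname{Det}(H^j(\partial))$ is unique with $c_j=\mu_{B^j,H^j,A^j}(\partial(a_{j-1})\otimes h_j\otimes a_j)$; $\phi_{C^\bullet}(c_0\otimes c_1^{-1}\otimes\cdots\otimes c_d^{(-1)^d})=(-1)^{\mathcal N}h_0\otimes\cdots\otimes h_d^{(-1)^d}$, $\mathcal N=\frac12\sum_j\dim A^j(\dim A^j+(-1)^{j+1})$. A chirality operator is an involution $\Gamma$ with $\Gamma(C^j)=C^{d-j}$; $c_\Gamma=(-1)^{\mathcal R(C^\bullet)}c_0\otimes c_1^{-1}\otimes\cdots\otimes c_{r-1}^{(-1)^{r-1}}\otimes(\Gamma c_{r-1})^{(-1)^r}\otimes\cdots\otimes(\Gamma c_0)^{-1}$ for nonzero $c_j\in\operatorname{Det}(C^j)$, $j<r$ (independent of the $c_j$), $\mathcal R(C^\bullet)=\frac12\sum_{j=0}^{r-1}\dim C^j(\dim C^j+(-1)^{r+j})$; the refined torsion is $\rho_\Gamma=\phi_{C^\bullet}(c_\Gamma)$. *)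

(* Defs.v *)
From HB Require Import structures.
From mathcomp Require Import all_boot all_order all_algebra.
From mathcomp Require Import all_classical all_reals.
From mathcomp Require Import topology normedtype derive.
From mathcomp Require complex.
Import complex.ComplexField.

Set Implicit Arguments.
Unset Strict Implicit.
Unset Printing Implicit Defensive.

Import Order.TTheory GRing.Theory Num.Theory.
Import numFieldNormedType.Exports.
Local Open Scope ring_scope.

(* The total space C = C^0 (+) ... (+) C^d is k^N (row vectors, linear   *)
(* maps act on the right: x |-> x *m M).  The graded piece C^j is the    *)
(* row space of E j : 'M_N.  The differential is D : 'M_N.               *)

Section Torsion.
Variable K : fieldType.
Variable N : nat.

Definition is_complex (d : nat) (E : nat -> 'M[K]_N) (D : 'M[K]_N) : Prop :=
  [/\ mxdirect (\sum_(j < d.+1) E j)%MS,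
      (\sum_(j < d.+1) E j :=: 1%:M)%MS,
      (forall j, (j < d)%N -> (E j *m D <= E j.+1)%MS),
      E d *m D = 0 &
      D *m D = 0].

Definition chirality (d : nat) (E : nat -> 'M[K]_N) (G : 'M[K]_N) : Prop :=
  G *m G = 1%:M /\ (forall j, (j <= d)%N -> (E j *m G :=: E (d - j)%N)%MS).

(* determinant of a matrix that is square (0 if the dimensions differ) *)
Definition sqdet m n (M : 'M[K]_(m, n)) : K := \det (conform_mx (0 : 'M[K]_m) M).

(* Det(U) is identified with K through the fixed basis row_base U:
   the coordinate of v_1 /\ ... /\ v_k (rows of V, lying in U)
   is the determinant of the coefficient matrix of V in that basis. *)
Definition wcoord (U : 'M[K]_N) k (V : 'M[K]_(k, N)) : K :=
  sqdet (V *m pinvmx (row_base U)).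

Definition spow (j : nat) (s : K) : K := if odd j then s^-1 else s.

Variables (E : nat -> 'M[K]_N) (D : 'M[K]_N).

Definition Zsp j : 'M[K]_N := (E j :&: kermx D)%MS.
Definition Bsp j : 'M[K]_N :=
  match j with 0 => 0 | j'.+1 => (E j' *m D)%MS end.
(* chosen complements: B^j (+) H^j = Z^j,  Z^j (+) A^j = C^j *)
Definition Hsp j : 'M[K]_N := (Zsp j :\: Bsp j)%MS.
Definition Asp j : 'M[K]_N := (E j :\: Zsp j)%MS.

(* d(a_{j-1}) for the basis a_{j-1} = row_base A^{j-1}  (a_{-1} = 1) *)
Definition dArows j : nat := match j with 0 => 0 | j'.+1 => \rank (Asp j') end.
Definition dA j : 'M[K]_(dArows j, N) :=
  match j return 'M[K]_(dArows j, N) with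
  | 0 => 0
  | j'.+1 => row_base (Asp j') *m D
  end.

(* coordinate in Det(C^j) of  mu_{B,H,A}(d(a_{j-1}) (x) h_j (x) a_j)
   where h_j = row_base H^j; Det(H^j) ~ Det(H^j(d)) is identified with K
   through the (t-independent) basis of H^j(d) given by the classes of
   the rows of row_base H^j. *)
Definition gfac j : K :=
  wcoord (E j) (col_mx (col_mx (dA j) (row_base (Hsp j))) (row_base (Asp j))).

(* phi_{C^.} in coordinates: x j = coordinate of c_j in Det(C^j);
   the unique h_j has coordinate x j / gfac j; returns the coordinate of
   (-1)^Nexp h_0 (x) h_1^{-1} (x) ... in Det(H^.(d)). *)
Definition Nexp (d : nat) : nat :=
  (\sum_(j < d.+1)
     \rank (Asp j) * (if odd j then (\rank (Asp j)).+1 else (\rank (Asp j)).-1))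
  %/ 2.
Definition phiC (d : nat) (x : nat -> K) : K :=
  (-1) ^+ Nexp d * \prod_(j < d.+1) spow j (x j / gfac j).

Definition Rexp (r : nat) : nat :=
  (\sum_(j < r) \rank (E j) * (if odd (r + j) then (\rank (E j)).-1
                                             else (\rank (E j)).+1)) %/ 2.

(* c_Gamma, with the choice c_j = row_base (E j) (coordinate 1) for j < r;
   for j >= r the j-th factor is Gamma c_{d-j} in Det(C^j).
   c_Gamma = (-1)^R * (tuple xGamma). *)
Definition xGamma (r : nat) (G : 'M[K]_N) (j : nat) : K :=
  if (j < r)%N then 1 else wcoord (E j) (row_base (E (r.*2.-1 - j)%N) *m G).

(* refined torsion rho_Gamma = phi(c_Gamma), as a coordinate in Det(H^.(d)) *)
Definition rho (r : nat) (G : 'M[K]_N) : K :=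
  (-1) ^+ Rexp r * phiC (r.*2.-1) (xGamma r G).

(* Tr_s(M) = sum_j (-1)^j Tr(M|_{C^j}) for M preserving each C^j *)
Definition restr (U : 'M[K]_N) (M : 'M[K]_N) : 'M[K]_(\rank U) :=
  row_base U *m M *m pinvmx (row_base U).
Definition strace (d : nat) (M : 'M[K]_N) : K :=
  \sum_(j < d.+1) (-1) ^+ j * \tr (restr (E j) M).

End Torsion.

Definition has_derR (R : realType) (f : R -> R) (t v : R) : Prop :=
  is_derive t 1 f v.

Definition has_derC (R : realType) (f : R -> complex.complex R) (t : R)
  (v : complex.complex R) : Prop :=
  is_derive t 1 (fun s => complex.Re (f s)) (complex.Re v) /\
  is_derive t 1 (fun s => complex.Im (f s)) (complex.Im v).

Definition smooth (R : realType) (K : Type) (hd : (R -> K) -> R -> K -> Prop)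
  (f : R -> K) : Prop :=
  exists F : nat -> R -> K, F O = f /\ forall n t, hd (F n) t (F n.+1 t).

(* Main.v *)
Require Import Defs.
From HB Require Import structures.
From mathcomp Require Import all_boot all_order all_algebra.
From mathcomp Require Import all_classical all_reals.
From mathcomp Require Import topology normedtype derive.
From mathcomp Require complex.
From mathcomp Require Import ring all_fingroup zify.
Import complex.ComplexField.
Import GRing.Theory numFieldNormedType.Exports.
Local Open Scope ring_scope.

Set Implicit Arguments.
Unset Strict Implicit.
Unset Printing Implicit Defensive.
Import Order.TTheory GRing.Theory Num.Theory.

Section Gen.
Variable R : Type.
Variable K : fieldType.
Variable hd : (R -> K) -> R -> K -> Prop.
Hypothesis hd_cst : forall c t, hd (fun _ => c) t 0.
Hypothesis hd_add : forall f g t u v, hd f t u -> hd g t v ->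
  hd (fun s => f s + g s) t (u + v).
Hypothesis hd_mul : forall f g t u v, hd f t u -> hd g t v ->
  hd (fun s => f s * g s) t (u * g t + f t * v).
Hypothesis hd_uniq : forall f t u v, hd f t u -> hd f t v -> u = v.

Lemma hd_ext f g t u v : f =1 g -> u = v -> hd f t u -> hd g t v.
Proof. by move=> /funext -> ->. Qed.

Lemma hd_sum (I : Type) (r : seq I) (P : pred I) F Fd t :
  (forall i, P i -> hd (F i) t (Fd i)) ->
  hd (fun s => \sum_(i <- r | P i) F i s) t (\sum_(i <- r | P i) Fd i).
Proof.
move=> H; elim: r => [|i r IH].
  by apply: hd_ext (hd_cst 0 t) => [s|]; rewrite ?big_nil.
case Pi: (P i).
  apply: hd_ext (hd_add (H i Pi) IH) => [s|]; by rewrite big_cons Pi.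
by apply: hd_ext IH => [s|]; rewrite big_cons Pi.
Qed.

Lemma hd_cmul c f t u : hd f t u -> hd (fun s => c * f s) t (c * u).
Proof. move=> H; apply: hd_ext (hd_mul (hd_cst c t) H) => // ; by rewrite mul0r add0r. Qed.

Lemma hd_prod_ex (I : Type) (r : seq I) (P : pred I) F t :
  (forall i, P i -> exists v, hd (F i) t v) ->
  exists v, hd (fun s => \prod_(i <- r | P i) F i s) t v.
Proof.
move=> H; elim: r => [|i r [v IH]].
  by exists 0; apply: hd_ext (hd_cst 1 t) => [s|]; rewrite ?big_nil.
case Pi: (P i).
  have [u Hu] := H i Pi.
  eexists; apply: hd_ext (hd_mul Hu IH) => [s|]; [by rewrite big_cons Pi| by []].
by exists v; apply: hd_ext IH => [s|]; rewrite ?big_cons ?Pi.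
Qed.

Lemma hd_prod_log (I : Type) (r : seq I) F tau t :
  (forall i, hd (F i) t (F i t * tau i)) ->
  hd (fun s => \prod_(i <- r) F i s) t ((\prod_(i <- r) F i t) * \sum_(i <- r) tau i).
Proof.
move=> H; elim: r => [|i r IH].
  by apply: hd_ext (hd_cst 1 t) => [s|]; rewrite !big_nil ?mulr0.
apply: hd_ext (hd_mul (H i) IH) => [s|]; first by rewrite big_cons.
by rewrite !big_cons; ring.
Qed.


Lemma hdE f g t u v : hd f t u -> f =1 g -> u = v -> hd g t v.
Proof. by move=> H /funext <- <-. Qed.

Definition hdM m n (M : R -> 'M[K]_(m, n)) t (Md : 'M[K]_(m, n)) :=
  forall i j, hd (fun s => M s i j) t (Md i j).

Lemma hdM_cst m n (A : 'M[K]_(m, n)) t : hdM (fun _ => A) t 0.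
Proof. by move=> i j; apply: (hdE (hd_cst _ t)) => // ; rewrite mxE. Qed.

Lemma hdM_mul m n p (M : R -> 'M[K]_(m, n)) (M' : R -> 'M[K]_(n, p)) Md Md' t :
  hdM M t Md -> hdM M' t Md' ->
  hdM (fun s => M s *m M' s) t (Md *m M' t + M t *m Md').
Proof.
move=> H H' i j.
apply: (hdE (hd_sum (index_enum _) (P := xpredT) (fun k _ => hd_mul (H i k) (H' k j)))) => [s|].
  by rewrite mxE.
by rewrite !mxE -big_split /=; apply: eq_bigr => k _; rewrite ?mxE.
Qed.

Lemma hdM_lmul m n p (A : 'M[K]_(m, n)) (M : R -> 'M[K]_(n, p)) Md t :
  hdM M t Md -> hdM (fun s => A *m M s) t (A *m Md).
Proof.
move=> H; have := hdM_mul (hdM_cst A t) H.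
by rewrite mul0mx add0r.
Qed.

Lemma hdM_rmul m n p (A : 'M[K]_(n, p)) (M : R -> 'M[K]_(m, n)) Md t :
  hdM M t Md -> hdM (fun s => M s *m A) t (Md *m A).
Proof.
move=> H; have := hdM_mul H (hdM_cst A t).
by rewrite mulmx0 addr0.
Qed.

Lemma hd_det1 n (P : R -> 'M[K]_n) Pd t :
  hdM P t Pd -> P t = 1%:M -> hd (fun s => \det (P s)) t (\tr Pd).
Proof.
move=> H Pt.
pose Fd (σ : 'S_n) := if σ == 1%g then \tr Pd else 0.
have Hs : forall σ : 'S_n, true ->
   hd (fun s => (-1) ^+ σ * \prod_i P s i (σ i)) t ((-1) ^+ σ * Fd σ).
  move=> σ _; apply: hd_cmul; rewrite /Fd; case: eqP => [->|Hσ].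
    have Hi : forall i, hd (fun s => P s i ((1%g : 'S_n) i)) t (P t i ((1%g : 'S_n) i) * Pd i i).
      by move=> i; apply: (hdE (H i i)) => [s|]; rewrite ?perm1 // Pt mxE eqxx mul1r.
    apply: (hdE (hd_prod_log (index_enum _) Hi)) => [s|] //.
    rewrite big1 ?mul1r //= => i _; by rewrite perm1 Pt mxE eqxx.
  have /existsP [a Ha] : [exists a, σ a != a].
    case: (boolP [exists a, σ a != a]) => //; rewrite negb_exists => /forallP Hf; exfalso; apply: Hσ.
    by apply/permP => x; rewrite perm1; apply/eqP; have := Hf x; rewrite negbK.
  set b := σ a.
  have Hba : b != a by [].
  have Hb : σ b != b.
    apply/eqP => Hb0; have /perm_inj Hab : σ b = σ a by rewrite Hb0.
    by rewrite Hab eqxx in Hba.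
  have [w Hw] := hd_prod_ex (index_enum 'I_n) (P := fun i => (i != a) && (i != b))
                 (F := fun i s => P s i (σ i)) (t := t) (fun i _ => ex_intro _ _ (H i (σ i))).
  have Hm := hd_mul (H a (σ a)) (hd_mul (H b (σ b)) Hw).
  apply: (hdE Hm) => [s|].
    by rewrite [in RHS](bigD1 a) //= [in RHS](bigD1 b) //=.
  by rewrite !Pt !mxE (eq_sym b) (negbTE Hb) (eq_sym a) (negbTE Ha) !mul0r mulr0 !add0r.
apply: (hdE (hd_sum (index_enum _) Hs)) => [s|]; first by [].
rewrite (bigD1 1%g) //= big1 ?addr0; first by rewrite /Fd eqxx odd_perm1 expr0 mul1r.
by move=> σ Hσ; rewrite /Fd (negbTE Hσ) mulr0.
Qed.

End Gen.

Section Main.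
Variable R : Type.
Variable K : numFieldType.
Variable hd : (R -> K) -> R -> K -> Prop.
Hypothesis hd_cst : forall c t, hd (fun _ => c) t 0.
Hypothesis hd_add : forall f g t u v, hd f t u -> hd g t v ->
  hd (fun s => f s + g s) t (u + v).
Hypothesis hd_mul : forall f g t u v, hd f t u -> hd g t v ->
  hd (fun s => f s * g s) t (u * g t + f t * v).
Hypothesis hd_uniq : forall f t u v, hd f t u -> hd f t v -> u = v.

Let hdE := @hdE R K hd.
Let hdM := @hdM R K hd.

Lemma hd_det n (M : R -> 'M[K]_n) Md t : hdM M t Md -> M t \in unitmx ->
  hd (fun s => \det (M s)) t (\det (M t) * \tr (invmx (M t) *m Md)).
Proof.
move=> H U.
have HP := hdM_lmul hd_cst hd_add hd_mul (invmx (M t)) H.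
have P1 : invmx (M t) *m M t = 1%:M := mulVmx U.
have := hd_cmul hd_cst hd_mul (\det (M t)) (hd_det1 hd_cst hd_add hd_mul HP P1).
move=> H1; apply: (hdE H1) => // s; by rewrite -det_mulmx mulmxA mulmxV // mul1mx.
Qed.

Lemma hd_sqdet m n (e : m = n) (M : R -> 'M[K]_(m, n)) Md (X : 'M[K]_(n, m)) t :
  hdM M t Md -> M t *m X = 1%:M ->
  hd (fun s => sqdet (M s)) t (sqdet (M t) * \tr (X *m Md)).
Proof.
subst n => H HX; rewrite /sqdet.
have [U _] := mulmx1_unit HX.
have -> : X = invmx (M t) by rewrite -[X](mulKmx U) HX mulmx1.
apply: (hdE (hd_det H U)) => [s|]; by rewrite conform_mx_id.
Qed.

Lemma sqdet_mul m n (e : m = n) (A : 'M[K]_(m, n)) (B : 'M[K]_(n, m)) :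
  A *m B = 1%:M -> sqdet A * sqdet B = 1.
Proof. subst n => H; by rewrite /sqdet !conform_mx_id -det_mulmx H det1. Qed.

Section Chi.
Variables (N r : nat) (E : nat -> 'M[K]_N) (G : R -> 'M[K]_N) (Gd : 'M[K]_N) (t : R).
Hypothesis HG : forall s, chirality (r.*2.-1) E (G s).
Hypothesis HGd : hdM G t Gd.
Local Notation d := (r.*2.-1).
Local Notation b j := (row_base (E j)).

Lemma incl s j : (j <= d)%N -> (b j *m G s <= b (d - j))%MS.
Proof.
move=> Hj; rewrite (eqmxMr _ (eq_row_base _)) ((HG s).2 j Hj) eq_row_base //.
Qed.

Lemma GG s : G s *m G s = 1%:M.
Proof. exact: (HG s).1. Qed.

Lemma rank_eq j : (j <= d)%N -> \rank (E (d - j)) = \rank (E j).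
Proof.
move=> Hj; have U : G t \in unitmx by case: (mulmx1_unit (GG t)).
by rewrite -((HG t).2 j Hj) mxrankMfree // row_free_unit.
Qed.

Lemma NN'_gen a c (Bi : 'M[K]_(a, N)) (Bj : 'M[K]_(c, N)) (Pi : 'M[K]_(N, a))
  (Pj : 'M[K]_(N, c)) (Gs : 'M[K]_N) :
  Bi *m Gs *m Pj *m Bj = Bi *m Gs -> Gs *m Gs = 1%:M -> Bi *m Pi = 1%:M ->
  (Bi *m Gs *m Pj) *m (Bj *m Gs *m Pi) = 1%:M.
Proof. by move=> H1 H2 H3; rewrite !mulmxA H1 -(mulmxA Bi) H2 mulmx1 H3. Qed.

Lemma NN' s i j : (b i *m G s <= b j)%MS ->
  (b i *m G s *m pinvmx (b j)) *m (b j *m G s *m pinvmx (b i)) = 1%:M.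
Proof.
move=> H1; apply: NN'_gen; [exact: mulmxKpV | exact: GG | by rewrite mulmxVp // row_base_free].
Qed.

Lemma hdN i j : hdM (fun s => b i *m G s *m pinvmx (b j)) t (b i *m Gd *m pinvmx (b j)).
Proof. move=> p q; exact: (hdM_rmul hd_cst hd_add hd_mul (pinvmx (b j)) (hdM_lmul hd_cst hd_add hd_mul (b i) HGd)). Qed.

Lemma GGd : G t *m Gd + Gd *m G t = 0.
Proof.
rewrite addrC; apply/matrixP => i k.
have H1 := hdM_mul hd_cst hd_add hd_mul HGd HGd i k.
have H2 : hd (fun s => (G s *m G s) i k) t 0.
  apply: (hdE (hd_cst (1%:M i k) t)) => // s; by rewrite GG.
by rewrite (hd_uniq H1 H2) [RHS]mxE.
Qed.

Lemma Gd_incl i j : (b i *m G t <= b j)%MS -> (forall s, (b i *m G s <= b j)%MS) ->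
  b i *m Gd *m pinvmx (b j) *m b j = b i *m Gd.
Proof.
move=> _ Hs; apply/matrixP => p q.
have H1 := hdM_lmul hd_cst hd_add hd_mul (b i) HGd p q.
have H2 := hdM_rmul hd_cst hd_add hd_mul (pinvmx (b j) *m b j)
             (hdM_lmul hd_cst hd_add hd_mul (b i) HGd) p q.
have H3 : hd (fun s => (b i *m G s) p q) t ((b i *m Gd *m (pinvmx (b j) *m b j)) p q).
  apply: (hdE H2) => // s; by rewrite mulmxA mulmxKpV.
by rewrite [in RHS](hd_uniq H1 H3) -mulmxA.
Qed.

Lemma pair_gen a c (Bi : 'M[K]_(a, N)) (Bj : 'M[K]_(c, N)) (Pi : 'M[K]_(N, a))
  (Pj : 'M[K]_(N, c)) (Gt G' : 'M[K]_N) :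
  Bi *m G' *m Pj *m Bj = Bi *m G' -> Bj *m Gt *m Pi *m Bi = Bj *m Gt ->
  Gt *m G' = - (G' *m Gt) ->
  \tr (Bi *m (Gt *m G') *m Pi) = - \tr (Bj *m (Gt *m G') *m Pj).
Proof.
move=> H1 H2 H3; rewrite [in LHS]H3 mulmxN mulNmx linearN /=; congr (- _).
rewrite (mulmxA Bi G' Gt) -H1.
have -> : Bi *m G' *m Pj *m Bj *m Gt *m Pi = (Bi *m G' *m Pj) *m (Bj *m Gt *m Pi)
  by rewrite !mulmxA.
by rewrite mxtrace_mulC !mulmxA H2.
Qed.

Lemma pairing j : (j <= d)%N ->
  \tr (restr (E (d - j)) (G t *m Gd)) = - \tr (restr (E j) (G t *m Gd)).
Proof.
move=> Hj; set i := (d - j)%N.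
have Hi : (d - i)%N = j by rewrite /i subKn.
have Hs : forall s, (b i *m G s <= b j)%MS.
  by move=> s; have := incl s (leq_subr j d); rewrite -/i Hi.
rewrite /restr; apply: pair_gen.
- exact: Gd_incl (Hs t) Hs.
- exact: mulmxKpV (incl t Hj).
- by apply/eqP; rewrite -addr_eq0 GGd.
Qed.

Lemma incl' s j : (j <= d)%N -> (b (d - j) *m G s <= b j)%MS.
Proof. by move=> Hj; have := incl s (leq_subr j d); rewrite subKn. Qed.

Lemma tr_gen a c (Bi : 'M[K]_(a, N)) (Bj : 'M[K]_(c, N)) (P : 'M[K]_(N, a))
  (Pj : 'M[K]_(N, c)) (Gt G' : 'M[K]_N) :
  Bj *m Gt *m P *m Bi = Bj *m Gt ->
  \tr ((Bj *m Gt *m P) *m (Bi *m G' *m Pj)) = \tr (Bj *m (Gt *m G') *m Pj).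
Proof. by move=> H; rewrite !mulmxA H. Qed.

Definition f j s := spow j (wcoord (E j) (b (d - j) *m G s)).

Lemma hd_f j : (j <= d)%N ->
  hd (f j) t (f j t * ((-1) ^+ j * \tr (restr (E j) (G t *m Gd)))).
Proof.
move=> Hj; rewrite /f /spow /wcoord -signr_odd.
case: (boolP (odd j)) => Oj.
  have Hinv : forall s, (sqdet (b (d - j) *m G s *m pinvmx (b j)))^-1 =
                        sqdet (b j *m G s *m pinvmx (b (d - j))).
    move=> s; have := sqdet_mul (rank_eq Hj) (NN' (incl' s Hj)).
    move=> H; have Hn : sqdet (b (d - j) *m G s *m pinvmx (b j)) != 0.
      by apply/eqP => H0; move: H; rewrite H0 mul0r => /eqP; rewrite eq_sym oner_eq0.
    by rewrite -[LHS]mulr1 -H mulKf.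
  have H := hd_sqdet (esym (rank_eq Hj)) (@hdN j (d - j)) (NN' (incl t Hj)).
  apply: (hdE H) => [s|]; first by rewrite Hinv.
  rewrite Hinv tr_gen; last exact: mulmxKpV (incl' t Hj).
  by rewrite pairing // expr1 mulN1r.
have H := hd_sqdet (rank_eq Hj) (@hdN (d - j) j) (NN' (incl' t Hj)).
apply: (hdE H) => // .
rewrite tr_gen; last exact: mulmxKpV (incl t Hj).
by rewrite expr0 mul1r.
Qed.

Lemma hd_prod_in (rs : seq nat) (F : nat -> R -> K) tau :
  (forall i, i \in rs -> hd (F i) t (F i t * tau i)) ->
  hd (fun s => \prod_(i <- rs) F i s) t ((\prod_(i <- rs) F i t) * \sum_(i <- rs) tau i).
Proof.
elim: rs => [|i rs IH] H.
  by apply: (hdE (hd_cst 1 t)) => [s|]; rewrite !big_nil ?mulr0.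
have H1 := H i (mem_head _ _).
have H2 := IH (fun k Hk => H k (mem_behead (s := i :: rs) Hk)).
apply: (hdE (hd_mul H1 H2)) => [s|]; first by rewrite big_cons.
by rewrite !big_cons; ring.
Qed.

Hypothesis Hr : (0 < r)%N.

Lemma dS : d.+1 = (r + r)%N.
Proof. by rewrite prednK ?double_gt0 // addnn. Qed.

Lemma odd_d : odd d.
Proof. by have := odd_double r; rewrite -addnn -dS /= => /negbFE. Qed.

Let tau j := (-1) ^+ j * \tr (restr (E j) (G t *m Gd)).

Lemma tau_pair k : (k <= d)%N -> tau (d - k) = tau k.
Proof.
move=> Hk; rewrite /tau pairing // -signr_odd oddB // odd_d /=.
by rewrite -[in RHS]signr_odd; case: (odd k); rewrite /= ?expr0 ?expr1 ?mulN1r ?mul1r ?opprK.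
Qed.

Lemma half (x : K) : 2^-1 * (x + x) = x.
Proof. have H2 : (2 : K) != 0 by rewrite pnatr_eq0. by field. Qed.

Lemma sum_tau : \sum_(r <= j < d.+1) tau j = 2^-1 * strace E d (G t *m Gd).
Proof.
have S : strace E d (G t *m Gd) = \sum_(0 <= j < r) tau j + \sum_(r <= j < d.+1) tau j.
  have Hrd : (r <= d.+1)%N by rewrite dS leq_addr.
  by rewrite /strace -(big_mkord xpredT tau) (big_cat_nat (leq0n r) Hrd).
have S1 : \sum_(0 <= j < r) tau j = \sum_(r <= j < d.+1) tau j.
  have -> : \sum_(r <= j < d.+1) tau j = \sum_(0 <= j < r) tau (j + r).
    by rewrite dS -{1}[r]add0n big_addn addnK.
  rewrite big_nat_rev /=.
  apply: eq_big_nat => j /andP [_ Hj].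
  rewrite -tau_pair; last by have := dS; lia.
  congr tau; rewrite add0n.
  have -> : d = (r + r).-1 by rewrite -dS.
  lia.
by rewrite S S1 half.
Qed.

Lemma spowM j (x y : K) : spow j (x * y) = spow j x * spow j y.
Proof. by rewrite /spow; case: (odd j); rewrite ?invfM. Qed.

Lemma rho_eq (D : 'M[K]_N) s :
  rho E D r (G s) = ((-1) ^+ Rexp E r * ((-1) ^+ Nexp E D d *
     \prod_(j < d.+1) spow j (gfac E D j)^-1)) * \prod_(r <= j < d.+1) f j s.
Proof.
rewrite /rho /phiC -!mulrA; congr (_ * (_ * _)).
rewrite (eq_bigr _ (fun (j : 'I_d.+1) _ => spowM j _ _)) big_split /= mulrC; congr (_ * _).
have Hrd : (r <= d.+1)%N by rewrite dS leq_addr.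
rewrite -(big_mkord xpredT (fun j => spow j (xGamma E r (G s) j))).
rewrite (big_cat_nat (leq0n r) Hrd) /= big_nat_cond big1 ?mul1r.
  apply: eq_big_nat => j /andP [Hj _].
  by rewrite /xGamma ltnNge Hj /f.
move=> j /andP [/andP [_ Hj] _].
by rewrite /xGamma Hj /spow; case: (odd j); rewrite ?invr1.
Qed.

Lemma main_gen (D : 'M[K]_N) :
  hd (fun s => rho E D r (G s)) t
     (2^-1 * strace E d (G t *m Gd) * rho E D r (G t)).
Proof.
have Hf : forall j, j \in index_iota r d.+1 -> hd (f j) t (f j t * tau j).
  move=> j; rewrite mem_index_iota => /andP [_ Hj]; exact: hd_f.
have H := hd_cmul hd_cst hd_mul ((-1) ^+ Rexp E r * ((-1) ^+ Nexp E D d *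
     \prod_(j < d.+1) spow j (gfac E D j)^-1)) (hd_prod_in Hf).
apply: (hdE H) => [s|]; first by rewrite rho_eq.
rewrite rho_eq -sum_tau.
move: ((-1) ^+ Rexp E r * ((-1) ^+ Nexp E D d *
     \prod_(j < d.+1) spow j (gfac E D j)^-1)) => C.
move: (\prod_(r <= j < d.+1) f j t) (\sum_(r <= j < d.+1) tau j) => P S.
by rewrite mulrA mulrC.
Qed.

End Chi.


End Main.

Section I.
Variable R : realType.

Lemma R_cst (c : R) (t : R) : @has_derR R (fun _ => c) t 0.
Proof. exact: is_derive_cst. Qed.

Lemma R_add (f g : R -> R) (t u v : R) : @has_derR R f t u -> @has_derR R g t v ->
  @has_derR R (fun s => f s + g s) t (u + v).
Proof. move=> H1 H2; exact: is_deriveD. Qed.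

Lemma R_mul (f g : R -> R) (t u v : R) : @has_derR R f t u -> @has_derR R g t v ->
  @has_derR R (fun s => f s * g s) t (u * g t + f t * v).
Proof.
move=> H1 H2; have := is_deriveM H1 H2.
move=> H; rewrite /has_derR; change (is_derive t 1 (f * g) (u * g t + f t * v)).
have E : f t *: v + g t *: u = u * g t + f t * v by rewrite addrC [u * _]mulrC.
exact: (is_derive_eq H E).
Qed.

Lemma R_uniq (f : R -> R) (t u v : R) : @has_derR R f t u -> @has_derR R f t v -> u = v.
Proof.
move=> H1 H2; rewrite -(@derive_val R R^o R^o t 1 f u H1).
exact: (@derive_val R R^o R^o t 1 f v H2).
Qed.

Lemma ReD (x y : complex.complex R) : complex.Re (x + y) = complex.Re x + complex.Re y.
Proof. by case: x => a b; case: y. Qed.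
Lemma ImD (x y : complex.complex R) : complex.Im (x + y) = complex.Im x + complex.Im y.
Proof. by case: x => a b; case: y. Qed.
Lemma ReM (x y : complex.complex R) : complex.Re (x * y) =
  complex.Re x * complex.Re y - complex.Im x * complex.Im y.
Proof. by case: x => a b; case: y. Qed.
Lemma ImM (x y : complex.complex R) : complex.Im (x * y) =
  complex.Re x * complex.Im y + complex.Im x * complex.Re y.
Proof. by case: x => a b; case: y. Qed.

Lemma R_sub (f g : R -> R) (t u v : R) : @has_derR R f t u -> @has_derR R g t v ->
  @has_derR R (fun s => f s - g s) t (u - v).
Proof. move=> H1 H2; exact: is_deriveB. Qed.

Local Notation Re := complex.Re.
Local Notation Im := complex.Im.

Lemma C_cst (c : complex.complex R) (t : R) : @has_derC R (fun _ => c) t 0.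
Proof. split; exact: is_derive_cst. Qed.

Lemma C_add (f g : R -> complex.complex R) (t : R) u v :
  @has_derC R f t u -> @has_derC R g t v ->
  @has_derC R (fun s => f s + g s) t (u + v).
Proof.
move=> [H1 H2] [H3 H4]; split.
  have -> : (fun s => Re (f s + g s)) = (fun s => Re (f s) + Re (g s)).
    by apply: funext => s; rewrite ReD.
  by rewrite ReD; exact: R_add.
have -> : (fun s => Im (f s + g s)) = (fun s => Im (f s) + Im (g s)).
  by apply: funext => s; rewrite ImD.
by rewrite ImD; exact: R_add.
Qed.

Lemma C_mul (f g : R -> complex.complex R) (t : R) u v :
  @has_derC R f t u -> @has_derC R g t v ->
  @has_derC R (fun s => f s * g s) t (u * g t + f t * v).
Proof.
move=> [H1 H2] [H3 H4]; split.
  have -> : (fun s => Re (f s * g s)) =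
            (fun s => Re (f s) * Re (g s) - Im (f s) * Im (g s)).
    by apply: funext => s; rewrite ReM.
  have H := R_sub (R_mul H1 H3) (R_mul H2 H4).
  rewrite /has_derR in H *; apply: (is_derive_eq H).
  rewrite ReD !ReM; ring.
have -> : (fun s => Im (f s * g s)) =
          (fun s => Re (f s) * Im (g s) + Im (f s) * Re (g s)).
  by apply: funext => s; rewrite ImM.
have H := R_add (R_mul H1 H4) (R_mul H2 H3).
rewrite /has_derR in H *; apply: (is_derive_eq H).
rewrite ImD !ImM; ring.
Qed.

Lemma C_uniq (f : R -> complex.complex R) (t : R) u v :
  @has_derC R f t u -> @has_derC R f t v -> u = v.
Proof.
move=> [H1 H2] [H3 H4].
have E1 := R_uniq H1 H3; have E2 := R_uniq H2 H4.
by clear H1 H2 H3 H4; move: E1 E2; case: u => a b; case: v => c e /= -> ->.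
Qed.

End I.

Theorem proposition4p5 (R : realType) :
  (forall (N r : nat) (E : nat -> 'M[R]_N) (D : 'M[R]_N) (G Gdot : R -> 'M[R]_N),
     (0 < r)%N ->
     is_complex (r.*2.-1) E D ->
     (forall t, chirality (r.*2.-1) E (G t)) ->
     (forall i j, smooth (@has_derR R) (fun t => G t i j)) ->
     (forall t i j, has_derR (fun s => G s i j) t (Gdot t i j)) ->
     forall t, has_derR (fun s => rho E D r (G s)) t
       (2^-1 * strace E (r.*2.-1) (G t *m Gdot t) * rho E D r (G t)))
  /\
  (forall (N r : nat) (E : nat -> 'M[complex.complex R]_N) (D : 'M[complex.complex R]_N)
          (G Gdot : R -> 'M[complex.complex R]_N),
     (0 < r)%N ->
     is_complex (r.*2.-1) E D ->
     (forall t, chirality (r.*2.-1) E (G t)) ->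
     (forall i j, smooth (@has_derC R) (fun t => G t i j)) ->
     (forall t i j, has_derC (fun s => G s i j) t (Gdot t i j)) ->
     forall t, has_derC (fun s => rho E D r (G s)) t
       (2^-1 * strace E (r.*2.-1) (G t *m Gdot t) * rho E D r (G t))).
Proof.
split.
  move=> N r E D G Gdot Hr _ HG _ HGd t.
  exact: (main_gen (@R_cst R) (@R_add R) (@R_mul R) (@R_uniq R) HG (HGd t) Hr D).
move=> N r E D G Gdot Hr _ HG _ HGd t.
exact: (main_gen (@C_cst R) (@C_add R) (@C_mul R) (@C_uniq R) HG (HGd t) Hr D).
Qed.
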